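(* Let $\lambda\ge 0$ and $\Omega:\mathbb{R}^d\to[0,\infty)$ be fixed, and define for any finite set of samples $S\subset\mathbb{R}^d\times\mathbb{R}$ and $\boldsymbol{\theta}=(\mathbf{w},b)\in\mathbb{R}^{d+1}$ $$\mathrm{MSE}(S,\boldsymbol{\theta})=\frac{1}{|S|}\sum_{(\mathbf{x},y)\in S}(\mathbf{w}^\top\mathbf{x}+b-y)^2,\qquad \mathcal{L}(S,\boldsymbol{\theta})=\mathrm{MSE}(S,\boldsymbol{\theta})+\lambda\,\Omega(\mathbf{w}).$$ Let $\mathcal{D}_{tr}$ be a pristine training set of $n$ samples, let $0\le\alpha<1$ be such that $\alpha n$ is an integer, and let $\mathcal{D}_p$ be an arbitrary set of $\alpha n$ samples (poisoning points), so that $\mathcal{D}=\mathcal{D}_{tr}\cup\mathcal{D}_p$ has $N=(1+\alpha)n$ samples indexed by $\{1,\dots,N\}$. Let $(\hat{\boldsymbol{\theta}},\hat{\mathcal{I}})$ be a global minimizer of $$\min_{\boldsymbol{\theta},\,\mathcal{I}}\ \mathcal{L}(\mathcal{D}^{\mathcal{I}},\boldsymbol{\theta})\quad\text{subject to } \mathcal{I}\subseteq\{1,\dots,N\},\ |\mathcal{I}|=n,$$ where $\mathcal{D}^{\mathcal{I}}$ denotes the samples of $\mathcal{D}$ with indices in $\mathcal{I}$, and let $\boldsymbol{\theta}^*\in\arg\min_{\boldsymbol{\theta}}\mathcal{L}(\mathcal{D}_{tr},\boldsymbol{\theta})$. Then there exists a subset $\mathcal{D}'\subseteq\mathcal{D}_{tr}$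 of $(1-\alpha)n$ pristine samples such that $$\mathrm{MSE}(\mathcal{D}',\hat{\boldsymbol{\theta}})\le\Big(1+\frac{\alpha}{1-\alpha}\Big)\,\mathcal{L}(\mathcal{D}_{tr},\boldsymbol{\theta}^* ).$$ No assumption is made on how $\mathcal{D}_p$ is generated.
   Context: $\mathcal{L}$ is the regularized linear-regression loss with linear predictor $f(\mathbf{x},\boldsymbol{\theta})=\mathbf{w}^\top\mathbf{x}+b$; typical choices of $\Omega$ are $0$ (OLS), $\tfrac12\|\mathbf{w}\|_2^2$ (ridge), $\|\mathbf{w}\|_1$ (LASSO), or an elastic-net combination. *)

(* Defs.v *)
(* the statement is purely algebraic/order-theoretic over the reals,
   so it is stated for an arbitrary real field R. *)
From HB Require Import structures.
From mathcomp Require Import all_boot all_order all_algebra.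
Set Implicit Arguments. Unset Strict Implicit. Unset Printing Implicit Defensive.
Import Order.TTheory GRing.Theory Num.Theory.
Local Open Scope ring_scope.

Definition dotv (R : numFieldType) (d : nat) (w x : 'rV[R]_d) : R :=
  \sum_(j < d) w 0 j * x 0 j.

(* MSE(S, (w,b)) for the sub-sample S = {(x i, y i) | i in A} of an indexed data set *)
Definition mse (R : numFieldType) (d : nat) (I : finType) (A : {set I})
    (x : I -> 'rV[R]_d) (y : I -> R) (w : 'rV[R]_d) (b : R) : R :=
  (#|A|%:R)^-1 * \sum_(i in A) (dotv w (x i) + b - y i) ^+ 2.

Definition loss (R : numFieldType) (d : nat) (lam : R) (Omega : 'rV[R]_d -> R)
    (I : finType) (A : {set I}) (x : I -> 'rV[R]_d) (y : I -> R)
    (w : 'rV[R]_d) (b : R) : R :=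
  mse A x y w b + lam * Omega w.

(* concatenation of the pristine set (indices 0..n-1) and the poisoning set
   (indices n..n+m-1) into the full data set D indexed by 'I_(n+m) *)
Definition catd (T : Type) (n m : nat) (ftr : 'I_n -> T) (fp : 'I_m -> T)
    (i : 'I_(n + m)) : T :=
  match split i with inl j => ftr j | inr k => fp k end.

(* Main.v *)
Require Import Defs.
From HB Require Import structures.
From mathcomp Require Import all_boot all_order all_algebra.
From mathcomp Require Import ring.
Import Order.TTheory GRing.Theory Num.Theory.
Local Open Scope ring_scope.

Lemma catdL (T : Type) (n m : nat) (f : 'I_n -> T) (g : 'I_m -> T) (i : 'I_n) :
  catd f g (lshift m i) = f i.
Proof. by rewrite /catd -[lshift m i]/(unsplit (inl i)) unsplitK. Qed.

Lemma exists_subset_card {T : finType} {A : {set T}} {k : nat} :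
  (k <= #|A|)%N -> exists B : {set T}, B \subset A /\ #|B| = k.
Proof.
elim: k => [|k IH] hk.
  by exists set0; rewrite sub0set cards0.
have [B [sBA cB]] := IH (ltnW hk).
have : (0 < #|A :\: B|)%N by rewrite cardsD (setIidPr sBA) cB subn_gt0.
case/card_gt0P => x; rewrite inE => /andP [xB xA].
exists (x |: B); split; first by rewrite subUset sub1set xA.
by rewrite cardsU1 xB cB.
Qed.

Lemma sum_sub_le (R : realDomainType) (T : finType) (A B : {set T}) (F : T -> R) :
  B \subset A -> (forall i, 0 <= F i) ->
  \sum_(i in B) F i <= \sum_(i in A) F i.
Proof.
move=> sBA F0; rewrite [X in _ <= X](big_setID B) /= (setIidPr sBA) lerDl.
by apply: sumr_ge0.
Qed.

Theorem theorem2 (R : realFieldType) (d n m : nat)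
    (lam alpha : R) (Omega : 'rV[R]_d -> R)
    (hlam : 0 <= lam) (hOmega : forall w, 0 <= Omega w)
    (halpha0 : 0 <= alpha) (halpha1 : alpha < 1)
    (hn : (0 < n)%N) (hm : m%:R = alpha * n%:R)
    (xtr : 'I_n -> 'rV[R]_d) (ytr : 'I_n -> R)
    (xp : 'I_m -> 'rV[R]_d) (yp : 'I_m -> R)
    (what : 'rV[R]_d) (bhat : R) (Ihat : {set 'I_(n + m)})
    (hIhat : #|Ihat| = n)
    (hmin : forall (w : 'rV[R]_d) (b : R) (I : {set 'I_(n + m)}), #|I| = n ->
       loss lam Omega Ihat (catd xtr xp) (catd ytr yp) what bhat
       <= loss lam Omega I (catd xtr xp) (catd ytr yp) w b)
    (wstar : 'rV[R]_d) (bstar : R)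
    (hstar : forall (w : 'rV[R]_d) (b : R),
       loss lam Omega [set: 'I_n] xtr ytr wstar bstar
       <= loss lam Omega [set: 'I_n] xtr ytr w b) :
  exists D' : {set 'I_n}, #|D'| = (n - m)%N /\
    mse D' xtr ytr what bhat
    <= (1 + alpha / (1 - alpha)) * loss lam Omega [set: 'I_n] xtr ytr wstar bstar.
Proof.
have nR : 0 < n%:R :> R by rewrite ltr0n.
have mn : (m < n)%N.
  rewrite -(ltr_nat R) hm -[X in _ < X]mul1r ltr_pM2r //.
pose T := [set i : 'I_n | lshift m i \in Ihat].
have cT : (n - m <= #|T|)%N.
  have sub : Ihat \subset (lshift m @: T) :|: [set rshift n k | k : 'I_m].
    apply/subsetP => j; rewrite -(splitK j); case: (split j) => [i|k] /= jI.
      by rewrite inE; apply/orP; left; apply: imset_f; rewrite inE.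
    by rewrite inE; apply/orP; right; apply: imset_f.
  have h1 := subset_leq_card sub; rewrite hIhat in h1.
  have h2 := leq_card_setU (lshift m @: T) [set rshift n k | k : 'I_m].
  have h3 := leq_imset_card (lshift m) T.
  have h4 := leq_imset_card (@rshift n m) 'I_m; rewrite card_ord in h4.
  rewrite leq_subLR; apply: (leq_trans h1); apply: (leq_trans h2).
  by rewrite addnC leq_add.
have [D' [sD' cD']] := exists_subset_card cT.
exists D'; split => //.
pose L := loss lam Omega [set: 'I_n] xtr ytr wstar bstar.
pose g := fun j => (dotv what (catd xtr xp j) + bhat - catd ytr yp j) ^+ 2.
pose f := fun i => (dotv what (xtr i) + bhat - ytr i) ^+ 2.
have I0c : #|lshift m @: [set: 'I_n]| = n by rewrite card_imset ?cardsT ?card_ord //; apply: lshift_inj.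
have step1 := hmin wstar bstar _ I0c.
have eqL : loss lam Omega (lshift m @: [set: 'I_n]) (catd xtr xp) (catd ytr yp) wstar bstar = L.
  rewrite /L /loss /mse I0c cardsT card_ord big_imset /=; last by move=> a b _ _; apply: lshift_inj.
  by congr (_ * _ + _); apply: eq_bigr => i _; rewrite !catdL.
rewrite eqL in step1.
have step2 : (n%:R)^-1 * \sum_(j in Ihat) g j <= L.
  apply: le_trans step1; rewrite /loss /mse hIhat lerDl; exact: mulr_ge0.
have step3 : \sum_(i in D') f i <= \sum_(j in Ihat) g j.
  have -> : \sum_(i in D') f i = \sum_(j in lshift m @: D') g j.
    rewrite big_imset /=; last by move=> a b _ _; apply: lshift_inj.
    by apply: eq_bigr => i _; rewrite /g !catdL.
  apply: sum_sub_le; last by move=> j; rewrite /g sqr_ge0.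
  apply/subsetP => j /imsetP [i iD ->]; have := subsetP sD' i iD; by rewrite inE.
have nmR : (n - m)%:R = (1 - alpha) * n%:R :> R by rewrite natrB ?(ltnW mn) // hm mulrBl mul1r.
have a1 : 0 < 1 - alpha by rewrite subr_gt0.
have -> : 1 + alpha / (1 - alpha) = (1 - alpha)^-1.
  by field; rewrite gt_eqF.
rewrite /mse cD' nmR invfM -mulrA ler_pM2l ?invr_gt0 //.
apply: le_trans (step2); rewrite ler_pM2l ?invr_gt0 //.
Qed.
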